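(* Let $n,m$ be integers with $6 \le n \le m \le 2n-2$ and $m \ne 2n-5$. If $n+m \equiv 1 \pmod 3$, then \[\gamma^{\rm ID}(K_n\times K_m) = \left\lceil \frac{2m+2n}{3}\right\rceil.\]
   Context: For a graph $G$ and vertex $x$, $N[x]$ denotes the closed neighborhood of $x$. A set $C \subseteq V(G)$ is an identifying code (ID code) of $G$ if $C$ is a dominating set of $G$ and $N[x]\cap C \ne N[y]\cap C$ for every pair of distinct vertices $x,y$. $\gamma^{\rm ID}(G)$ is the minimum cardinality of an ID code of $G$. The direct product $G_1\times G_2$ has vertex set $V(G_1)\times V(G_2)$, with $(u_1,u_2)$ adjacent to $(v_1,v_2)$ iff $u_1v_1\in E(G_1)$ and $u_2v_2 \in E(G_2)$. $K_n$ is the complete graph on vertex set $[n]=\{1,\dots,n\}$; thus in $K_n\times K_m$ two vertices are adjacent iff they differ in both coordinates. *)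

(* Defs.v *)
From mathcomp Require Import all_boot.
Set Implicit Arguments. Unset Strict Implicit. Unset Printing Implicit Defensive.

Definition closed_nbhd (T : finType) (adj : rel T) (x : T) : {set T} :=
  [set y | (y == x) || adj x y].

Definition is_idcode (T : finType) (adj : rel T) (C : {set T}) : bool :=
  [forall x, closed_nbhd adj x :&: C != set0] &&
  [forall x, forall y, (x != y) ==> (closed_nbhd adj x :&: C != closed_nbhd adj y :&: C)].

(* gamma^ID(G): minimum cardinality of an ID code (the default #|T|+1 is only
   reached when G has no ID code, which is not the case in our application). *)
Definition gammaID (T : finType) (adj : rel T) : nat :=
  \big[minn/#|T|.+1]_(C : {set T} | is_idcode adj C) #|C|.

Definition KxK_adj (n m : nat) : rel ('I_n * 'I_m) :=
  fun u v => (u.1 != v.1) && (u.2 != v.2).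

(* Main.v *)
Require Import Defs.
From mathcomp Require Import all_boot zify.
Set Implicit Arguments. Unset Strict Implicit. Unset Printing Implicit Defensive.

Definition dR (I J : finType) (p : I -> J -> bool) (i : I) : nat := \sum_j (p i j : nat).
Definition tr (I J : finType) (p : I -> J -> bool) : J -> I -> bool := fun j i => p i j.
Definition z0 (I J : finType) (p : I -> J -> bool) := \sum_i (dR p i == 0 : nat).
Definition L1 (I J : finType) (p : I -> J -> bool) := \sum_i (dR p i == 1 : nat).
Definition D2 (I J : finType) (p : I -> J -> bool) := \sum_i (dR p i == 2 : nat).
Definition D3 (I J : finType) (p : I -> J -> bool) := \sum_i (2 < dR p i : nat).
Definition XX (I J : finType) (p : I -> J -> bool) := \sum_i (dR p i - 2).
Definition cc (I J : finType) (p : I -> J -> bool) := \sum_i \sum_j (p i j : nat).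
Definition aa (I J : finType) (p : I -> J -> bool) :=
  \sum_i \sum_j (p i j && (dR p i == 1) && (dR (tr p) j == 1) : nat).
Definition NN (I J : finType) (p : I -> J -> bool) :=
  \sum_i \sum_j (p i j && (1 < dR p i) && (1 < dR (tr p) j) : nat).
Definition P2 (I J : finType) (p : I -> J -> bool) :=
  \sum_i \sum_j (p i j && (dR p i == 2) && (dR (tr p) j == 1) : nat).
Definition P3 (I J : finType) (p : I -> J -> bool) :=
  \sum_i \sum_j (p i j && (2 < dR p i) && (dR (tr p) j == 1) : nat).

Lemma le_sum_term (I : finType) (F : I -> nat) i : F i <= \sum_k F k.
Proof. by rewrite (bigD1 i) //= leq_addr. Qed.

Lemma dR_pos (I J : finType) (p : I -> J -> bool) i j : p i j -> 0 < dR p i.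
Proof. move=> h; apply: leq_trans (le_sum_term (fun j => (p i j : nat)) j); by rewrite h. Qed.

Lemma dC_pos (I J : finType) (p : I -> J -> bool) i j : p i j -> 0 < dR (tr p) j.
Proof. by move=> h; apply: (@dR_pos _ _ (tr p) j i). Qed.

Lemma sum_rowF (I J : finType) (p : I -> J -> bool) (F : I -> nat) :
  \sum_i \sum_j (p i j * F i) = \sum_i dR p i * F i.
Proof. apply: eq_bigr => i _; by rewrite /dR big_distrl. Qed.

Lemma sum_colF (I J : finType) (p : I -> J -> bool) (F : J -> nat) :
  \sum_i \sum_j (p i j * F j) = \sum_j dR (tr p) j * F j.
Proof. rewrite exchange_big; apply: eq_bigr => j _; by rewrite /dR big_distrl. Qed.

Lemma G1 (I J : finType) (p : I -> J -> bool) : #|I| = z0 p + L1 p + D2 p + D3 p.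
Proof.
rewrite -sum1_card /z0 /L1 /D2 /D3 -!big_split /=; apply: eq_bigr => i _.
by case: (dR p i) => [|[|[|d]]].
Qed.

Lemma G2 (I J : finType) (p : I -> J -> bool) : cc p = L1 p + 2 * D2 p + 2 * D3 p + XX p.
Proof.
rewrite /cc /L1 /D2 /D3 /XX !big_distrr -!big_split /=; apply: eq_bigr => i _.
rewrite -/(dR p i); lia.
Qed.

Lemma L1_row (I J : finType) (p : I -> J -> bool) :
  L1 p = \sum_i \sum_j (p i j * (dR p i == 1)).
Proof. rewrite sum_rowF /L1; apply: eq_bigr => i _; lia. Qed.

Lemma L1_col (I J : finType) (p : I -> J -> bool) :
  L1 (tr p) = \sum_i \sum_j (p i j * (dR (tr p) j == 1)).
Proof. rewrite sum_colF /L1; apply: eq_bigr => i _; lia. Qed.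

Lemma G3 (I J : finType) (p : I -> J -> bool) : cc p + aa p = L1 p + L1 (tr p) + NN p.
Proof.
rewrite L1_row L1_col /cc /aa /NN -!big_split /=; apply: eq_bigr => i _.
rewrite -!big_split /=; apply: eq_bigr => j _.
case h: (p i j) => //=.
have := dR_pos h; have := dC_pos h; lia.
Qed.

Lemma G4 (I J : finType) (p : I -> J -> bool) : D3 p <= XX p.
Proof. apply: leq_sum => i _; lia. Qed.

Lemma G4' (I J : finType) (p : I -> J -> bool) : D3 p = 0 -> XX p = 0.
Proof.
move=> h; apply/eqP; rewrite /XX sum_nat_eq0; apply/forallP => i; apply/implyP => _.
have := le_sum_term (fun i => (2 < dR p i : nat)) i; rewrite -/(D3 p) h; lia.
Qed.

Lemma G5 (I J : finType) (p : I -> J -> bool) : L1 (tr p) = aa p + P2 p + P3 p.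
Proof.
rewrite L1_col /aa /P2 /P3 -!big_split /=; apply: eq_bigr => i _.
rewrite -!big_split /=; apply: eq_bigr => j _.
case h: (p i j) => //=.
have := dR_pos h; lia.
Qed.

Lemma G6 (I J : finType) (p : I -> J -> bool) : P3 p <= 2 * D3 p + XX p.
Proof.
apply: (@leq_trans (\sum_i \sum_j (p i j * (2 < dR p i)))).
  apply: leq_sum => i _; apply: leq_sum => j _; case: (p i j) => //=; lia.
rewrite sum_rowF /D3 /XX big_distrr -big_split; apply: leq_sum => i _ /=; lia.
Qed.

Lemma G7 (I J : finType) (p : I -> J -> bool) : P2 p <= 2 * D2 p.
Proof.
apply: (@leq_trans (\sum_i \sum_j (p i j * (dR p i == 2)))).
  apply: leq_sum => i _; apply: leq_sum => j _; case: (p i j) => //=; lia.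
rewrite sum_rowF /D2 big_distrr; apply: leq_sum => i _ /=; lia.
Qed.

Lemma cc_tr (I J : finType) (p : I -> J -> bool) : cc (tr p) = cc p.
Proof. by rewrite /cc exchange_big. Qed.

Lemma aa_tr (I J : finType) (p : I -> J -> bool) : aa (tr p) = aa p.
Proof.
rewrite /aa exchange_big; apply: eq_bigr => i _; apply: eq_bigr => j _.
have -> : tr (tr p) = p by [].
rewrite [tr p j i]/tr; by case: (p i j); case: (dR p i == 1); case: (dR (tr p) j == 1).
Qed.

Lemma two_terms (T : finType) (F : T -> bool) x y :
  x != y -> F x -> F y -> 2 <= \sum_z (F z : nat).
Proof.
move=> nxy Fx Fy; rewrite (bigD1 x) //= (bigD1 y) /=; last by rewrite eq_sym.
by rewrite Fx Fy.
Qed.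

Lemma three_terms (T : finType) (F : T -> bool) x y w :
  x != y -> x != w -> y != w -> F x -> F y -> F w -> 3 <= \sum_z (F z : nat).
Proof.
move=> nxy nxw nyw Fx Fy Fw; rewrite (bigD1 x) //= (bigD1 y) /=; last by rewrite eq_sym.
rewrite (bigD1 w) /=; last by rewrite ![w == _]eq_sym nxw nyw.
by rewrite Fx Fy Fw.
Qed.

Lemma sum_pos_ex (T : finType) (F : T -> bool) : 0 < \sum_z (F z : nat) -> exists z, F z.
Proof.
case: (pickP F) => [z Fz|h]; first by exists z.
by rewrite big1 // => z _; rewrite h.
Qed.

Lemma sum_2_ex (T : finType) (F : T -> bool) : 1 < \sum_z (F z : nat) ->
  exists x y, [/\ x != y, F x & F y].
Proof.
move=> h; case: (pickP F) => [x Fx|h0]; last by move: h; rewrite big1 // => z _; rewrite h0.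
case: (pickP (fun y => (y != x) && F y)) => [y /andP[nyx Fy]|h1].
  by exists x, y; split => //; rewrite eq_sym.
move: h; rewrite (bigD1 x) //= big1 ?Fx // => z nzx.
by move: (h1 z); rewrite nzx /= => ->.
Qed.

Lemma sum_1_uniq (T : finType) (F : T -> bool) x y :
  \sum_z (F z : nat) = 1 -> F x -> F y -> x = y.
Proof.
move=> h Fx Fy; apply/eqP; apply/negP => /negP nxy.
by have := two_terms nxy Fx Fy; rewrite h.
Qed.

Lemma deg0 (I J : finType) (p : I -> J -> bool) i c : dR p i = 0 -> ~~ p i c.
Proof. move=> h; apply/negP => /dR_pos; by rewrite h. Qed.

Lemma deg1 (I J : finType) (p : I -> J -> bool) i j c :
  dR p i = 1 -> p i j -> p i c -> c = j.
Proof. move=> h pj pc; exact: (sum_1_uniq (F := p i) h pc pj). Qed.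

Lemma deg2 (I J : finType) (p : I -> J -> bool) i j l c :
  dR p i = 2 -> j != l -> p i j -> p i l -> p i c -> (c == j) || (c == l).
Proof.
move=> h njl pj pl pc.
case: (eqVneq c j) => [//|ncj].
case: (eqVneq c l) => [|ncl]; first by rewrite orbT.
have := three_terms (F := p i) njl _ _ pj pl pc.
by rewrite -/(dR p i) h; apply; rewrite eq_sym.
Qed.

Lemma deg2ex (I J : finType) (p : I -> J -> bool) i j :
  dR p i = 2 -> p i j -> exists l, l != j /\ p i l.
Proof.
move=> h pj; case: (pickP (fun l => (l != j) && p i l)) => [l /andP[? ?]|h1].
  by exists l.
move: h; rewrite /dR (bigD1 j) //= big1 ?pj // => z nzj.
by move: (h1 z); rewrite nzj /= => ->.
Qed.

Definition boxfree (I J : finType) (p : I -> J -> bool) := forall i k j l,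
  i != k -> j != l ->
  (forall r, p r j -> (r == i) || (r == k)) -> (forall r, p r l -> (r == i) || (r == k)) ->
  (forall c, p i c -> (c == j) || (c == l)) -> (forall c, p k c -> (c == j) || (c == l)) ->
  False.

Definition rowfree (I J : finType) (p : I -> J -> bool) :=
  forall i k, i != k -> dR p i = 0 -> dR p k = 0 -> False.

Lemma boxfree_tr (I J : finType) (p : I -> J -> bool) : boxfree p -> boxfree (tr p).
Proof. move=> B j l i k njl nik h1 h2 h3 h4; exact: (B i k j l nik njl h3 h4 h1 h2). Qed.

Lemma T1 (I J : finType) (p : I -> J -> bool) : rowfree p -> z0 p <= 1.
Proof.
move=> R; rewrite leqNgt; apply/negP => /sum_2_ex [i [k [nik /eqP hi /eqP hk]]].
exact: (R i k nik hi hk).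
Qed.

Lemma pair_sum (I J : finType) (F : I -> J -> bool) :
  \sum_i \sum_j (F i j : nat) = \sum_(z : I * J) (F z.1 z.2 : nat).
Proof. by rewrite pair_bigA. Qed.

Lemma T2 (I J : finType) (p : I -> J -> bool) : boxfree p -> aa p <= 1.
Proof.
move=> B; rewrite leqNgt /aa pair_sum; apply/negP => /sum_2_ex [[i j] [[k l] [nz]]] /=.
move=> /andP[/andP[pij /eqP ri] /eqP cj] /andP[/andP[pkl /eqP rk] /eqP cl].
have nik : i != k.
  apply/eqP => eik; subst k; move: nz; rewrite (deg1 ri pij pkl) eqxx //.
have njl : j != l.
  apply/eqP => ejl; subst l; move: nz; rewrite (@deg1 _ _ (tr p) j i k cj pij pkl) eqxx //.
apply: (B i k j l nik njl).
- by move=> r prj; rewrite (@deg1 _ _ (tr p) j i r cj pij prj) eqxx.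
- by move=> r prl; rewrite (@deg1 _ _ (tr p) l k r cl pkl prl) eqxx orbT.
- by move=> c pic; rewrite (deg1 ri pij pic) eqxx.
- by move=> c pkc; rewrite (deg1 rk pkl pkc) eqxx orbT.
Qed.

Lemma z0_ex (I J : finType) (p : I -> J -> bool) : 0 < z0 p -> exists i, dR p i = 0.
Proof. by move=> /sum_pos_ex [i /eqP]; exists i. Qed.

Lemma T3 (I J : finType) (p : I -> J -> bool) :
  boxfree p -> 0 < z0 p -> 0 < z0 (tr p) -> aa p = 0.
Proof.
move=> B /z0_ex [r0 hr0] /z0_ex [c0 hc0]; apply/eqP; rewrite -leqn0 leqNgt; apply/negP.
rewrite /aa pair_sum => /sum_pos_ex [[i j]] /= /andP[/andP[pij /eqP ri] /eqP cj].
have nri : r0 != i by apply/eqP => e; subst; move: (deg0 j hr0); rewrite pij.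
have ncj : c0 != j by apply/eqP => e; subst; move: (@deg0 _ _ (tr p) _ i hc0); rewrite /tr pij.
apply: (B r0 i c0 j nri ncj).
- by move=> r prc; move: (@deg0 _ _ (tr p) _ r hc0); rewrite /tr prc.
- by move=> r prj; rewrite (@deg1 _ _ (tr p) j i r cj pij prj) eqxx orbT.
- by move=> c prc; move: (deg0 c hr0); rewrite prc.
- by move=> c pic; rewrite (deg1 ri pij pic) eqxx orbT.
Qed.

Lemma T4 (I J : finType) (p : I -> J -> bool) :
  boxfree p -> 0 < z0 p -> P2 p <= D2 p.
Proof.
move=> B /z0_ex [r0 hr0]; apply: leq_sum => i _.
case: (eqVneq (dR p i) 2) => ri; last first.
    by rewrite big1 // => j _; rewrite andbF.
move: isT; apply: contraLR; rewrite -ltnNge => /sum_2_ex [j [l [njl /andP[/andP[pij _] /eqP cj]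
   /andP[/andP[pil _] /eqP cl]]]].
have nri : r0 != i by apply/eqP => e; subst; move: (deg0 j hr0); rewrite pij.
exfalso; apply: (B r0 i j l nri njl).
- by move=> r prj; rewrite (@deg1 _ _ (tr p) j i r cj pij prj) eqxx orbT.
- by move=> r prl; rewrite (@deg1 _ _ (tr p) l i r cl pil prl) eqxx orbT.
- by move=> c prc; move: (deg0 c hr0); rewrite prc.
- by move=> c pic; exact: (deg2 ri njl pij pil pic).
Qed.

Lemma XX0 (I J : finType) (p : I -> J -> bool) i : XX p = 0 -> dR p i <= 2.
Proof. move=> h; have := le_sum_term (fun i => dR p i - 2) i; rewrite -/(XX p) h; lia. Qed.

Lemma T5 (I J : finType) (p : I -> J -> bool) :
  boxfree p -> XX p = 0 -> XX (tr p) = 0 -> NN p <> 1.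
Proof.
move=> B xr xc h; have h' := h.
move: h; rewrite /NN pair_sum => h.
have [[i j] /= Fz] : exists z : I * J, (p z.1 z.2 && (1 < dR p z.1) && (1 < dR (tr p) z.2)).
  by apply: sum_pos_ex; rewrite h.
move: (Fz) => /andP[/andP[pij ri] cj].
have ri2 : dR p i = 2 by have := XX0 i xr; lia.
have cj2 : dR (tr p) j = 2 by have := XX0 (p := tr p) j xc; lia.
have [l [nlj pil]] := deg2ex ri2 pij.
have [k [nki pkj0]] := @deg2ex _ _ (tr p) j i cj2 pij.
have pkj : p k j := pkj0.
have cl : dR (tr p) l = 1.
  case: (ltnP 1 (dR (tr p) l)) => hl; last by have := @dC_pos _ _ p i l pil; lia.
    have := @sum_1_uniq _ _ (i, j) (i, l) h Fz; rewrite /= pil ri hl => /(_ isT) [e].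
    by move: nlj; rewrite e eqxx.
have rk : dR p k = 1.
  case: (ltnP 1 (dR p k)) => hk; last by have := @dR_pos _ _ p k j pkj; lia.
    have := @sum_1_uniq _ _ (i, j) (k, j) h Fz; rewrite /= pkj hk cj => /(_ isT) [e].
    by move: nki; rewrite e eqxx.
apply: (B i k j l); rewrite 1?eq_sym //.
- by move=> r prj; apply: (@deg2 _ _ (tr p) j i k r cj2 _ pij pkj prj); rewrite eq_sym.
- by move=> r prl; rewrite (@deg1 _ _ (tr p) l i r cl pil prl) eqxx.
- by move=> c pic; apply: (deg2 ri2 _ pij pil pic); rewrite eq_sym.
- by move=> c pkc; rewrite (deg1 rk pkj pkc) eqxx.
Qed.

Lemma arith (n m c z0R z0C LR LC D2R D2C D3R D3C xR xC a NN P2R P3R P2C P3C : nat) :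
 n = z0R + LR + D2R + D3R ->
 m = z0C + LC + D2C + D3C ->
 c = LR + 2*D2R + 2*D3R + xR ->
 c = LC + 2*D2C + 2*D3C + xC ->
 c + a = LR + LC + NN ->
 D3R <= xR -> D3C <= xC -> (D3R = 0 -> xR = 0) -> (D3C = 0 -> xC = 0) ->
 LC = a + P2R + P3R -> P3R <= 2*D3R + xR -> P2R <= 2*D2R ->
 LR = a + P2C + P3C -> P3C <= 2*D3C + xC -> P2C <= 2*D2C ->
 z0R <= 1 -> z0C <= 1 -> a <= 1 -> z0R + z0C + a <= 2 ->
 (z0R = 1 -> P2R <= D2R) -> (z0C = 1 -> P2C <= D2C) ->
 (xR = 0 -> xC = 0 -> NN <> 1) ->
 6 <= n -> n <= m -> m <= 2*n-2 -> m <> 2*n-5 ->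
 forall q, n + m = 3*q+1 -> 2*(n+m) <= 3*c + 1.
Proof. intros. lia. Qed.

Lemma lower (I J : finType) (p : I -> J -> bool) q :
  boxfree p -> rowfree p -> rowfree (tr p) ->
  6 <= #|I| -> #|I| <= #|J| -> #|J| <= 2 * #|I| - 2 -> #|J| <> 2 * #|I| - 5 ->
  #|I| + #|J| = 3 * q + 1 -> 2 * (#|I| + #|J|) <= 3 * cc p + 1.
Proof.
move=> B R RT h1 h2 h3 h4 hq.
have BT := boxfree_tr B.
have e1 := G1 p. have e2 := G1 (tr p).
have e3 := G2 p. have e4 := G2 (tr p). rewrite cc_tr in e4.
have e5 := G3 p.
have e6 := G4 p. have e7 := G4 (tr p). have e8 := @G4' _ _ p. have e9 := @G4' _ _ (tr p).
have e10 := G5 p. have e11 := G6 p. have e12 := G7 p.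
have e13 := G5 (tr p). rewrite aa_tr in e13. have e14 := G6 (tr p). have e15 := G7 (tr p).
have e16 := T1 R. have e17 := T1 RT. have e18 := T2 B.
have e19 : z0 p + z0 (tr p) + aa p <= 2.
  case: (posnP (z0 p)) => hz; first by lia.
  case: (posnP (z0 (tr p))) => hz'; first by lia.
  by rewrite (T3 B hz hz'); lia.
have e20 : z0 p = 1 -> P2 p <= D2 p by move=> hz; apply: T4 => //; lia.
have e21 : z0 (tr p) = 1 -> P2 (tr p) <= D2 (tr p) by move=> hz; apply: T4 => //; lia.
have e22 := T5 B.
exact: (arith e1 e2 e3 e4 e5 e6 e7 e8 e9 e10 e11 e12 e13 e14 e15 e16 e17 e18 e19 e20 e21 e22 h1 h2 h3 h4 hq).
Qed.

Lemma sum_card (T : finType) (A : {set T}) : \sum_z (z \in A : nat) = #|A|.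
Proof. by rewrite -sum1_card [RHS]big_mkcond /=; apply: eq_bigr => z _; case: (z \in A). Qed.

Lemma gamma_le (T : finType) (adj : rel T) (C0 : {set T}) :
  is_idcode adj C0 -> gammaID adj <= #|C0|.
Proof.
move=> h; rewrite /gammaID.
have : C0 \in index_enum {set T} by rewrite mem_index_enum.
elim: (index_enum _) => [//|x s IH]; rewrite inE big_cons.
case: (eqVneq C0 x) => [<- _|nx /= hs]; first by rewrite h geq_minl.
case: (is_idcode adj x); last exact: IH.
by apply: leq_trans (geq_minr _ _) (IH hs).
Qed.

Lemma gamma_ge (T : finType) (adj : rel T) b :
  b <= #|T|.+1 -> (forall C, is_idcode adj C -> b <= #|C|) -> b <= gammaID adj.
Proof.
move=> h1 h2; rewrite /gammaID; apply: (big_ind (fun x => b <= x)) => //.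
by move=> x y hx hy; rewrite leq_min hx hy.
Qed.


Lemma cc_card n m (C : {set 'I_n * 'I_m}) : cc (fun i j => (i, j) \in C) = #|C|.
Proof. by rewrite /cc (pair_sum (fun i j => (i, j) \in C)) -sum_card; apply: eq_bigr => -[i j] _. Qed.

Lemma id_boxfree n m (C : {set 'I_n * 'I_m}) :
  is_idcode (@KxK_adj n m) C -> boxfree (fun i j => (i, j) \in C).
Proof.
move=> /andP[_ /forallP H] i k j l nik njl h1 h2 h3 h4.
move: (H (i, j)) => /forallP /(_ (k, l)).
have -> : ((i, j) != (k, l)) by rewrite xpair_eqE negb_and nik.
apply/negP; rewrite negbK; apply/eqP/setP => [[r c]]; rewrite !inE /KxK_adj /= !xpair_eqE.
case hz: ((r, c) \in C); rewrite ?andbF //.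
have Hi : (r == i) ==> (c == j) || (c == l) by apply/implyP => /eqP e; apply: h3; rewrite -e.
have Hk : (r == k) ==> (c == j) || (c == l) by apply/implyP => /eqP e; apply: h4; rewrite -e.
have Hj : (c == j) ==> (r == i) || (r == k) by apply/implyP => /eqP e; apply: h1; rewrite -e.
have Hl : (c == l) ==> (r == i) || (r == k) by apply/implyP => /eqP e; apply: h2; rewrite -e.
have Nik : ~~ ((r == i) && (r == k)).
  by apply/negP => /andP[/eqP e1 /eqP e2]; move: nik; rewrite -e1 e2 eqxx.
have Njl : ~~ ((c == j) && (c == l)).
  by apply/negP => /andP[/eqP e1 /eqP e2]; move: njl; rewrite -e1 e2 eqxx.
rewrite !andbT (eq_sym i r) (eq_sym j c) (eq_sym k r) (eq_sym l c).
move: Hi Hk Hj Hl Nik Njl.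
by case: (r == i); case: (r == k); case: (c == j); case: (c == l).
Qed.

Lemma id_rowfree n m (C : {set 'I_n * 'I_m}) (j0 : 'I_m) :
  is_idcode (@KxK_adj n m) C -> rowfree (fun i j => (i, j) \in C).
Proof.
move=> /andP[_ /forallP H] i k nik hi hk.
move: (H (i, j0)) => /forallP /(_ (k, j0)).
have -> : ((i, j0) != (k, j0)) by rewrite xpair_eqE negb_and nik.
apply/negP; rewrite negbK; apply/eqP/setP => [[r c]]; rewrite !inE /KxK_adj /= !xpair_eqE.
case hz: ((r, c) \in C); rewrite ?andbF //.
have nri : r != i by apply/eqP => e; subst; move: (deg0 c hi); rewrite hz.
have nrk : r != k by apply/eqP => e; subst; move: (deg0 c hk); rewrite hz.
by rewrite (negbTE nri) (negbTE nrk) (eq_sym i r) (eq_sym k r) nri nrk.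
Qed.

Lemma id_colfree n m (C : {set 'I_n * 'I_m}) (i0 : 'I_n) :
  is_idcode (@KxK_adj n m) C -> rowfree (tr (fun i j => (i, j) \in C)).
Proof.
move=> /andP[_ /forallP H] j l njl hj hl.
move: (H (i0, j)) => /forallP /(_ (i0, l)).
have -> : ((i0, j) != (i0, l)) by rewrite xpair_eqE negb_and njl orbT.
apply/negP; rewrite negbK; apply/eqP/setP => [[r c]]; rewrite !inE /KxK_adj /= !xpair_eqE.
case hz: ((r, c) \in C); rewrite ?andbF //.
have ncj : c != j by apply/eqP => e; subst; move: (@deg0 _ _ (tr _) _ r hj); rewrite /tr hz.
have ncl : c != l by apply/eqP => e; subst; move: (@deg0 _ _ (tr _) _ r hl); rewrite /tr hz.
by rewrite (negbTE ncj) (negbTE ncl) (eq_sym j c) (eq_sym l c) ncj ncl !andbF.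
Qed.

Lemma lower_main n m q (C : {set 'I_n * 'I_m}) :
  is_idcode (@KxK_adj n m) C ->
  6 <= n -> n <= m -> m <= 2 * n - 2 -> m <> 2 * n - 5 ->
  n + m = 3 * q + 1 -> 2 * (n + m) <= 3 * #|C| + 1.
Proof.
move=> hid h1 h2 h3 h4 hq.
have i0 : 'I_n by exists 0; lia.
have j0 : 'I_m by exists 0; lia.
have := @lower _ _ (fun i j => (i, j) \in C) q; rewrite !card_ord cc_card; apply => //.
- exact: id_boxfree.
- exact: id_rowfree j0 hid.
- exact: id_colfree i0 hid.
Qed.

Lemma memN n m (C : {set 'I_n * 'I_m}) (x z : 'I_n * 'I_m) :
  (z \in closed_nbhd (@KxK_adj n m) x :&: C) =
  ((((z.1 == x.1) && (z.2 == x.2)) || ((z.1 != x.1) && (z.2 != x.2))) && (z \in C)).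
Proof. by case: z x => [a b] [c d]; rewrite !inE /KxK_adj /= xpair_eqE (eq_sym c a) (eq_sym d b). Qed.

Lemma suff n m (P : 'I_n -> 'I_m -> bool) :
 (forall i, exists j, P i j) -> (forall j, exists i, P i j) ->
 (forall i j, P i j -> (forall c, P i c -> c = j) \/ (forall r, P r j -> r = i)) ->
 (forall i j, P i j -> (exists c, c != j /\ P i c) \/ (exists r, r != i /\ P r j)) ->
 (forall i j, exists i' j', [/\ i' != i, j' != j & P i' j']) ->
 is_idcode (@KxK_adj n m) [set z | P z.1 z.2].
Proof.
move=> rowne colne uniq other dom.
set C := [set z | P z.1 z.2].
have inC : forall i j, ((i, j) \in C) = P i j by move=> i j; rewrite inE.
apply/andP; split.
  apply/forallP => -[i j]; have [i' [j' [h1 h2 h3]]] := dom i j.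
  apply/set0Pn; exists (i', j'); rewrite memN inC h3 /= andbT.
  by rewrite h1 h2 orbT.
apply/forallP => -[i j]; apply/forallP => -[k l]; apply/implyP => nxy; apply/negP => /eqP E.
have Ez : forall z, (z \in closed_nbhd (@KxK_adj n m) (i, j) :&: C) =
                    (z \in closed_nbhd (@KxK_adj n m) (k, l) :&: C) by move=> z; rewrite E.
have Ez' : forall r c, P r c -> (((r == i) && (c == j)) || ((r != i) && (c != j))) =
    (((r == k) && (c == l)) || ((r != k) && (c != l))).
  by move=> r c prc; have := Ez (r, c); rewrite !memN /= inC prc !andbT.
case: (eqVneq i k) => [eik|nik].
  subst k; have njl : j != l by move: nxy; rewrite xpair_eqE eqxx.
  have nlj : l != j by rewrite eq_sym.
  have [r prl] := colne l.
  move: (Ez' r l prl); rewrite eqxx (negbTE nlj) /=.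
  by case: (r == i).
have nki : k != i by rewrite eq_sym.
case: (eqVneq j l) => [ejl|njl].
  subst l; have [c pic] := rowne i.
  move: (Ez' i c pic); rewrite eqxx (negbTE nik) /= ?andbT.
  by case: (c == j).
have nlj : l != j by rewrite eq_sym.
have h1 : forall r, P r j -> (r == i) || (r == k).
  move=> r prj; move: (Ez' r j prj); rewrite eqxx (negbTE njl) /= ?andbT ?andbF ?orbF.
  by case: (r == i); case: (r == k).
have h2 : forall r, P r l -> (r == i) || (r == k).
  move=> r prl; move: (Ez' r l prl); rewrite eqxx (negbTE nlj) /= ?andbT ?andbF ?orbF.
  by case: (r == i); case: (r == k).
have h3 : forall c, P i c -> (c == j) || (c == l).
  move=> c pic; move: (Ez' i c pic); rewrite eqxx (negbTE nik) /= ?andbT.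
  by case: (c == j); case: (c == l).
have h4 : forall c, P k c -> (c == j) || (c == l).
  move=> c pkc; move: (Ez' k c pkc); rewrite eqxx (negbTE nki) /= ?andbT.
  by case: (c == j); case: (c == l).
have U : forall a b x y, P a b -> x != b -> y != a -> ~~ (P a x && P y b).
  move=> a b x y pab nxb nya; apply/negP => /andP[pax pyb].
  case: (uniq a b pab) => [/(_ x pax) e|/(_ y pyb) e]; [by move: nxb; rewrite e eqxx|by move: nya; rewrite e eqxx].
have r1 : P i j || P i l.
  have [c pic] := rowne i; case/orP: (h3 c pic) => /eqP e; subst; by rewrite pic ?orbT.
have r2 : P k j || P k l.
  have [c pkc] := rowne k; case/orP: (h4 c pkc) => /eqP e; subst; by rewrite pkc ?orbT.
have r3 : P i j || P k j.
  have [r prj] := colne j; case/orP: (h1 r prj) => /eqP e; subst; by rewrite prj ?orbT.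
have r4 : P i l || P k l.
  have [r prl] := colne l; case/orP: (h2 r prl) => /eqP e; subst; by rewrite prl ?orbT.
have o1 : P i j ==> P i l || P k j.
  apply/implyP => p0; case: (other _ _ p0) => [[c [nc pc]]|[r [nr pr]]].
    by case/orP: (h3 c pc) => /eqP e; [by move: nc; rewrite e eqxx|by rewrite -e pc].
  by case/orP: (h1 r pr) => /eqP e; [by move: nr; rewrite e eqxx|by rewrite -e pr orbT].
have o2 : P i l ==> P i j || P k l.
  apply/implyP => p0; case: (other _ _ p0) => [[c [nc pc]]|[r [nr pr]]].
    by case/orP: (h3 c pc) => /eqP e; [by rewrite -e pc|by move: nc; rewrite e eqxx].
  by case/orP: (h2 r pr) => /eqP e; [by move: nr; rewrite e eqxx|by rewrite -e pr orbT].
have o3 : P k j ==> P k l || P i j.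
  apply/implyP => p0; case: (other _ _ p0) => [[c [nc pc]]|[r [nr pr]]].
    by case/orP: (h4 c pc) => /eqP e; [by move: nc; rewrite e eqxx|by rewrite -e pc].
  by case/orP: (h1 r pr) => /eqP e; [by rewrite -e pr orbT|by move: nr; rewrite e eqxx].
have o4 : P k l ==> P k j || P i l.
  apply/implyP => p0; case: (other _ _ p0) => [[c [nc pc]]|[r [nr pr]]].
    by case/orP: (h4 c pc) => /eqP e; [by rewrite -e pc|by move: nc; rewrite e eqxx].
  by case/orP: (h2 r pr) => /eqP e; [by rewrite -e pr orbT|by move: nr; rewrite e eqxx].
have u1 : P i j ==> ~~ (P i l && P k j) by apply/implyP => p0; apply: U.
have u2 : P i l ==> ~~ (P i j && P k l) by apply/implyP => p0; apply: U.
have u3 : P k j ==> ~~ (P k l && P i j) by apply/implyP => p0; apply: U.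
have u4 : P k l ==> ~~ (P k j && P i l) by apply/implyP => p0; apply: U.
move: r1 r2 r3 r4 o1 o2 o3 o4 u1 u2 u3 u4.
by case: (P i j); case: (P i l); case: (P k j); case: (P k l).
Qed.

Definition Pn (x i j : nat) : bool :=
  ((i == 0) && (j < 3)) || ((0 < i) && (i <= x) && ((j == 2*i+1) || (j == 2*i+2))) ||
  ((x < i) && (j == 3 + 2*x + (i - x - 1) %/ 2)).

Lemma ord_neq n (a b : 'I_n) : nat_of_ord a != nat_of_ord b -> a != b.
Proof. by apply: contra => /eqP ->. Qed.

Lemma constr_id n m x y : n = x + 2*y + 1 -> m = 2*x + y + 3 -> 3 <= x + y ->
  is_idcode (@KxK_adj n m) [set z : 'I_n * 'I_m | Pn x z.1 z.2].
Proof.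
move=> hn hm hxy; apply: (@suff n m (fun i j => Pn x i j)).
- move=> i; have hi := ltn_ord i.
  case: (eqVneq (nat_of_ord i) 0) => h0.
    have hJ : 0 < m by lia. by exists (Ordinal hJ); rewrite /Pn /=; lia.
  case: (leqP (nat_of_ord i) x) => hx.
    have hJ : 2 * nat_of_ord i + 1 < m by lia. by exists (Ordinal hJ); rewrite /Pn /=; lia.
  have hJ : 3 + 2*x + (nat_of_ord i - x - 1) %/ 2 < m by lia.
  by exists (Ordinal hJ); rewrite /Pn /=; lia.
- move=> j; have hj := ltn_ord j.
  case: (ltnP (nat_of_ord j) 3) => h0.
    have hI : 0 < n by lia. by exists (Ordinal hI); rewrite /Pn /=; lia.
  case: (ltnP (nat_of_ord j) (3 + 2 * x)) => hx.
    have hI : (nat_of_ord j - 1) %/ 2 < n by lia. by exists (Ordinal hI); rewrite /Pn /=; lia.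
  have hI : x + 1 + 2 * (nat_of_ord j - 3 - 2*x) < n by lia.
  by exists (Ordinal hI); rewrite /Pn /=; lia.
- move=> i j pij; case: (leqP (nat_of_ord i) x) => hix.
    by right => r prj; apply: ord_inj; move: pij prj; rewrite /Pn; lia.
  by left => c pic; apply: ord_inj; move: pij pic; rewrite /Pn; lia.
- move=> i j pij; have hi := ltn_ord i; have hj := ltn_ord j.
  case: (leqP (nat_of_ord i) x) => hix.
    left.
    case: (eqVneq (nat_of_ord i) 0) => h0.
      case: (eqVneq (nat_of_ord j) 0) => h1.
        have hc : 1 < m by lia.
        by exists (Ordinal hc); split; [apply: ord_neq => /=; lia|move: pij; rewrite /Pn /=; lia].
      have hc : 0 < m by lia.
      by exists (Ordinal hc); split; [apply: ord_neq => /=; lia|move: pij; rewrite /Pn /=; lia].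
    case: (eqVneq (nat_of_ord j) (2 * nat_of_ord i + 1)) => h1.
      have hc : 2 * nat_of_ord i + 2 < m by lia.
      by exists (Ordinal hc); split; [apply: ord_neq => /=; lia|move: pij; rewrite /Pn /=; lia].
    have hc : 2 * nat_of_ord i + 1 < m by lia.
    by exists (Ordinal hc); split; [apply: ord_neq => /=; lia|move: pij; rewrite /Pn /=; lia].
  right.
  case: (eqVneq ((nat_of_ord i - x - 1) %% 2) 1) => h1.
    have hr : nat_of_ord i - 1 < n by lia.
    by exists (Ordinal hr); split; [apply: ord_neq => /=; lia|move: pij; rewrite /Pn /=; lia].
  have hr : nat_of_ord i + 1 < n by move: pij; rewrite /Pn; lia.
  by exists (Ordinal hr); split; [apply: ord_neq => /=; lia|move: pij; rewrite /Pn /=; lia].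
- move=> i j; have hi := ltn_ord i; have hj := ltn_ord j.
  case: (eqVneq (nat_of_ord i) 0) => hi0.
    case: (eqVneq (nat_of_ord j) 3) => hj3.
      have h1 : n - 1 < n by lia. have h2 : m - 1 < m by lia.
      exists (Ordinal h1), (Ordinal h2); split; try (apply: ord_neq => /=; lia).
      rewrite /Pn /=; lia.
    have h1 : 1 < n by lia. have h2 : 3 < m by lia.
    exists (Ordinal h1), (Ordinal h2); split; try (apply: ord_neq => /=; lia).
    rewrite /Pn /=; lia.
  case: (eqVneq (nat_of_ord j) 0) => hj0.
    have h1 : 0 < n by lia. have h2 : 1 < m by lia.
    exists (Ordinal h1), (Ordinal h2); split; try (apply: ord_neq => /=; lia).
    rewrite /Pn /=; lia.
  have h1 : 0 < n by lia. have h2 : 0 < m by lia.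
  exists (Ordinal h1), (Ordinal h2); split; try (apply: ord_neq => /=; lia).
  rewrite /Pn /=; lia.
Qed.

Lemma constr_card n m x y : n = x + 2*y + 1 -> m = 2*x + y + 3 ->
  #|[set z : 'I_n * 'I_m | Pn x z.1 z.2]| <= 2*x + 2*y + 3.
Proof.
move=> hn hm.
pose kz (z : 'I_n * 'I_m) : nat :=
  if nat_of_ord z.2 < 3 + 2*x then nat_of_ord z.2 else nat_of_ord z.1 + x + 2.
rewrite cardE -(size_map kz) -(size_iota 0 (2*x + 2*y + 3)).
apply: uniq_leq_size.
  rewrite map_inj_in_uniq ?enum_uniq // => -[i1 j1] [i2 j2]; rewrite !mem_enum !inE /= => h1 h2.
  have := ltn_ord i1; have := ltn_ord i2; have := ltn_ord j1; have := ltn_ord j2.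
  rewrite /kz /=; move: h1 h2; rewrite /Pn.
  case: ifP => c1; case: ifP => c2 => *; congr (_, _); apply: ord_inj; lia.
move=> k /mapP [[i j] hz ->]; rewrite mem_iota add0n /kz /=; move: hz; rewrite mem_enum inE /= /Pn.
have := ltn_ord i; have := ltn_ord j.
case: ifP => c1 *; lia.
Qed.


Theorem theorem5 (n m : nat) :
  6 <= n -> n <= m -> m <= 2 * n - 2 -> m != 2 * n - 5 ->
  (n + m) %% 3 = 1 ->
  gammaID (@KxK_adj n m) = (2 * m + 2 * n + 2) %/ 3.
Proof.
move=> h1 h2 h3 /eqP h4 h5.
have e1 := divn_eq (2 * m - n - 5) 3. have e2 := divn_eq (2 * n - m + 1) 3.
have e3 := divn_eq (n + m) 3. have e4 := divn_eq (2 * m + 2 * n + 2) 3.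
have r1 : (2 * m - n - 5) %% 3 = 0 by lia.
have r2 : (2 * n - m + 1) %% 3 = 0 by lia.
have hq : n + m = 3 * ((n + m) %/ 3) + 1 by lia.
have hx : n = (2 * m - n - 5) %/ 3 + 2 * ((2 * n - m + 1) %/ 3) + 1 by lia.
have hy : m = 2 * ((2 * m - n - 5) %/ 3) + (2 * n - m + 1) %/ 3 + 3 by lia.
have hxy : 3 <= (2 * m - n - 5) %/ 3 + (2 * n - m + 1) %/ 3 by lia.
apply/eqP; rewrite eqn_leq; apply/andP; split.
  apply: leq_trans (gamma_le (constr_id hx hy hxy)) _.
  have := constr_card hx hy; lia.
apply: gamma_ge.
  rewrite card_prod !card_ord.
  have : 6 * m <= n * m by rewrite leq_mul2r h1 orbT.
  lia.
move=> C hC; have := lower_main hC h1 h2 h3 h4 hq; move: #|C| => k; lia.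
Qed.
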